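(* For any generalized causal team $T$ over a signature $\sigma$: $T\models^g\Xi^{\{(s,\mathcal F),(t,\mathcal G)\}}$ for all $(s,\mathcal F),(t,\mathcal G)\in\mathbb S_\sigma$ with $\mathcal F\not\sim\mathcal G$, if and only if $T$ is uniform.
   Context: A signature $\sigma=(\mathrm{Dom},\mathrm{Ran})$: $\mathrm{Dom}$ nonempty finite set of variables, each with nonempty finite range $\mathrm{Ran}(X)$; $\mathbf X=\mathbf x$ abbreviates $X_1=x_1\wedge\dots\wedge X_n=x_n$ ($\mathbf x\in\prod\mathrm{Ran}(X_i)$), inconsistent if it contains $X=x,X=x'$ with $x\ne x'$. ${=}(V)$ is the constancy atom; $\bot$ abbreviates $X=x\wedge\neg(X=x)$; $\alpha\supset\beta$ abbreviates $\neg\alpha\vee\beta$; empty $\vee$-disjunction is $\bot$. Systems of functions $\mathcal F$: for each $V\in\mathrm{En}(\mathcal F)\subseteq\mathrm{Dom}$ parents $PA^{\mathcal F}_V\subseteq\mathrm{Dom}\setminus\{V\}$ and $\mathcal F_V:\mathrm{Ran}(PA^{\mathcal F}_V)\to\mathrm{Ran}(V)$; $\mathrm{Ex}(\mathcal F)=\mathrm{Dom}\setminus\mathrm{En}(\mathcal F)$; only recursive (acyclic parent graph), forming $\mathbb F_\sigma$. Assignments form $\mathbb A_\sigma$; $s$ compatible with $\mathcal F$ if $s(V)=\mathcal F_V(s(PA^{\mathcal F}_V))$ for $V\in\mathrm{En}(\mathcal F)$; $\mathbb S_\sigma$ = set of compatible pairs. A generalized causal team is a subset $T\subseteq\mathbb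 S_\sigma$; $T^-=\{s:(s,\mathcal F)\in T\}$. For consistent $\mathbf X=\mathbf x$: $\mathcal F_{\mathbf X=\mathbf x}$ restricts $\mathcal F$ to $\mathrm{En}(\mathcal F)\setminus\mathbf X$; $s^{\mathcal F}_{\mathbf X=\mathbf x}$: $X_i\mapsto x_i$, $V\mapsto s(V)$ on $\mathrm{Ex}(\mathcal F)\setminus\mathbf X$, $V\mapsto\mathcal F_V(s^{\mathcal F}_{\mathbf X=\mathbf x}(PA^{\mathcal F}_V))$ on $\mathrm{En}(\mathcal F)\setminus\mathbf X$; $T_{\mathbf X=\mathbf x}=\{(s^{\mathcal F}_{\mathbf X=\mathbf x},\mathcal F_{\mathbf X=\mathbf x}):(s,\mathcal F)\in T\}$. $\models^g$: $T\models X=x$ iff $s(X)=x$ for all $s\in T^-$; $T\models{=}(V)$ iff $s(V)=s'(V)$ for all $s,s'\in T^-$; $T\models\neg\alpha$ iff $\{(s,\mathcal F)\}\not\models\alpha$ for all $(s,\mathcal F)\in T$; $\wedge$ classical; $T\models\varphi\vee\psi$ iff $T=T_1\cup T_2$ with $T_1\models\varphi$, $T_2\models\psi$; $T\models\mathbf X=\mathbf x\;\Box\!\!\rightarrow\varphi$ iff $\mathbf X=\mathbf x$ inconsistent or $T_{\mathbf X=\mathbf x}\models\varphi$. $\mathrm{Cn}(\mathcal F)=\{V\in\mathrm{En}(\mathcal F):\mathcal F_V\text{ constant}\}$; $\mathcal F_V\sim\mathcal G_V$ iff $\mathcal F_V(\mathbf x\mathbf y)=\mathcal G_V(\mathbf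 x\mathbf z)$ for all $\mathbf x\in\mathrm{Ran}(PA^{\mathcal F}_V\cap PA^{\mathcal G}_V)$, $\mathbf y\in\mathrm{Ran}(PA^{\mathcal F}_V\setminus PA^{\mathcal G}_V)$, $\mathbf z\in\mathrm{Ran}(PA^{\mathcal G}_V\setminus PA^{\mathcal F}_V)$; $\mathcal F\sim\mathcal G$ iff $\mathrm{En}(\mathcal F)\setminus\mathrm{Cn}(\mathcal F)=\mathrm{En}(\mathcal G)\setminus\mathrm{Cn}(\mathcal G)$ and $\mathcal F_V\sim\mathcal G_V$ for each such $V$. $T$ is uniform if $\mathcal F\sim\mathcal G$ for all $(s,\mathcal F),(t,\mathcal G)\in T$. $T^{\mathcal F}=\{(s,\mathcal G)\in T:\mathcal G\sim\mathcal F\}$; $S\approx T$ iff $(S^{\mathcal F})^-=(T^{\mathcal F})^-$ for all $\mathcal F$; on pairs $(s,\mathcal F)\approx(t,\mathcal G)$ iff $s=t$ and $\mathcal F\sim\mathcal G$; $T/_{\approx}$ = set of $\approx$-classes of elements of $T$. $S\preccurlyeq T$ iff $S\approx R$ for some $R\subseteq T$ ($\emptyset\preccurlyeq T$ always). Formulas: $\Theta^{A}:=\bigvee_{s\in A}\bigwedge_{V\in\mathrm{Dom}}V=s(V)$. With $\mathbf W_V$ listing $\mathrm{Dom}\setminus\{V\}$: $\Phi^{\mathcal F}:=\bigwedge_{V\in\mathrm{En}(\mathcal F)\setminus\mathrm{Cn}(\mathcal F)}\eta(V)\wedge\bigwedge_{V\notin\mathrm{En}(\mathcal F)\setminus\mathrm{Cn}(\mathcal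 F)}\xi(V)$, $\eta(V)$ the conjunction of all $(\mathbf W=\mathbf w\wedge PA^{\mathcal F}_V=\mathbf p)\;\Box\!\!\rightarrow V=\mathcal F_V(\mathbf p)$ ($\mathbf W$ listing $\mathrm{Dom}\setminus(PA^{\mathcal F}_V\cup\{V\})$, $\mathbf w\in\mathrm{Ran}(\mathbf W)$, $\mathbf p\in\mathrm{Ran}(PA^{\mathcal F}_V)$), $\xi(V)$ the conjunction of all $V=v\supset(\mathbf W_V=\mathbf w\;\Box\!\!\rightarrow V=v)$. $\chi:=\bigwedge_V\bigwedge_{\mathbf w\in\mathrm{Ran}(\mathbf W_V)}(\mathbf W_V=\mathbf w\;\Box\!\!\rightarrow{=}(V))\wedge\bigwedge_V{=}(V)$; $\chi_0:=\bot$, $\chi_k:=\chi\vee\dots\vee\chi$ ($k$ disjuncts). For a nonempty generalized causal team $T$ with $|T/_{\approx}|=k+1$: $\Xi^T:=\chi_k\vee\Theta^{\mathbb A_\sigma\setminus T^-}\vee\bigvee\{\Theta^{\{s\}}\wedge\Phi^{\mathcal F}:s\in T^-,\ \mathcal F\in\mathbb F_\sigma,\ \{(s,\mathcal F)\}\not\preccurlyeq T\}$. *)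

(* Defs.v *)
From mathcomp Require Import all_boot.
From Stdlib Require Import Relations.

Set Implicit Arguments.
Unset Strict Implicit.
Unset Printing Implicit Defensive.

(* A signature: a nonempty finite set of variables Dom, each with a finite
   range Ran V (nonemptiness is a hypothesis of the theorem). *)
Record signature := Signature { Dom : finType; Ran : Dom -> finType }.
Arguments Ran : clear implicits.

Definition assign (sg : signature) := forall V : Dom sg, Ran sg V.

(* For V endogenous, fn V = Some f where
   f : assign -> Ran V only depends on the coordinates in pa V (this is the
   same data as a map Ran(PA_V) -> Ran(V)); for V exogenous fn V = None and
   pa V is (canonically) empty, so there is no junk data. *)
Record sysf (sg : signature) := Sysf {
  pa : Dom sg -> {set Dom sg};
  fn : forall V : Dom sg, option (assign sg -> Ran sg V) }.

Definition parent_rel (sg : signature) (F : sysf sg) (W V : Dom sg) : Prop :=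
  W \in pa F V.

Definition is_system (sg : signature) (F : sysf sg) : Prop :=
  (forall V, fn F V = None -> pa F V = set0) /\
  (forall V, V \notin pa F V) /\
  (forall V f, fn F V = Some f ->
     forall s s' : assign sg, (forall W, W \in pa F V -> s W = s' W) -> f s = f s') /\
  (forall V, ~ clos_trans _ (parent_rel F) V V).

Definition compatible (sg : signature) (s : assign sg) (F : sysf sg) : Prop :=
  forall V f, fn F V = Some f -> s V = f s.

Definition pair (sg : signature) := (assign sg * sysf sg)%type.
Definition team (sg : signature) := pair sg -> Prop.

Definition in_S (sg : signature) (p : pair sg) : Prop :=
  is_system p.2 /\ compatible p.1 p.2.

Definition gct (sg : signature) (T : team sg) : Prop := forall p, T p -> in_S p.

Definition team_asg (sg : signature) (T : team sg) (s : assign sg) : Prop :=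
  exists F, T (s, F).

Definition singleton (sg : signature) (p : pair sg) : team sg := fun q => q = p.
Definition pairteam (sg : signature) (p q : pair sg) : team sg :=
  fun r => r = p \/ r = q.

Definition intv (sg : signature) := seq {V : Dom sg & Ran sg V}.

Definition consistent (sg : signature) (Xx : intv sg) : Prop :=
  forall e1 e2, e1 \in Xx -> e2 \in Xx -> tag e1 = tag e2 -> e1 = e2.

Definition in_dom (sg : signature) (V : Dom sg) (Xx : intv sg) : bool :=
  V \in [seq tag e | e <- Xx].

Definition sys_do (sg : signature) (F : sysf sg) (Xx : intv sg) : sysf sg :=
  Sysf (fun V => if in_dom V Xx then set0 else pa F V)
       (fun V => if in_dom V Xx then None else fn F V).

(* t = s^F_{X=x}: the (for recursive F unique) assignment satisfying the
   defining equations *)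
Definition asg_do (sg : signature) (F : sysf sg) (Xx : intv sg) (s t : assign sg) : Prop :=
  (forall e, e \in Xx -> t (tag e) = tagged e) /\
  (forall V, ~~ in_dom V Xx ->
     match fn F V with
     | None => t V = s V
     | Some f => t V = f t
     end).

Definition team_do (sg : signature) (T : team sg) (Xx : intv sg) : team sg :=
  fun p => exists s F, T (s, F) /\ p.2 = sys_do F Xx /\ asg_do F Xx s p.1.

(* Formulas, shallowly: a formula is its class of (generalized causal) teams;
   "phi T" reads "T |=^g phi". *)
Definition form (sg : signature) := team sg -> Prop.

Definition f_eq (sg : signature) (X : Dom sg) (x : Ran sg X) : form sg :=
  fun T => forall p, T p -> p.1 X = x.
Arguments f_eq {sg} X x _.
Definition f_dep (sg : signature) (V : Dom sg) : form sg :=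
  fun T => forall p q, T p -> T q -> p.1 V = q.1 V.
Definition f_neg (sg : signature) (a : form sg) : form sg :=
  fun T => forall p, T p -> ~ a (singleton p).
Definition f_and (sg : signature) (phi psi : form sg) : form sg :=
  fun T => phi T /\ psi T.
Definition f_or (sg : signature) (phi psi : form sg) : form sg :=
  fun T => exists T1 T2 : team sg,
    (forall p, T p <-> T1 p \/ T2 p) /\ phi T1 /\ psi T2.
Definition f_cf (sg : signature) (Xx : intv sg) (phi : form sg) : form sg :=
  fun T => ~ consistent Xx \/ phi (team_do T Xx).
Definition f_impl (sg : signature) (a b : form sg) : form sg := f_or (f_neg a) b.

(* Finite conjunctions / disjunctions indexed by (finite) families; since
   wedge and vee are associative and commutative in team semantics, these
   coincide with iterated binary connectives (empty disjunction = bottom). *)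
Definition f_bigand (sg : signature) (I : Type) (P : I -> Prop) (phi : I -> form sg)
  : form sg := fun T => forall i, P i -> phi i T.
Definition f_bigor (sg : signature) (I : Type) (P : I -> Prop) (phi : I -> form sg)
  : form sg := fun T => exists Ti : I -> team sg,
    (forall p, T p <-> exists i, P i /\ Ti i p) /\ (forall i, P i -> phi i (Ti i)).

(* bottom = empty disjunction (true exactly of the empty team, like X=x /\ ~X=x) *)
Definition f_bot (sg : signature) : form sg :=
  f_bigor (fun _ : unit => False) (fun _ => fun _ => True).

Definition Theta (sg : signature) (A : assign sg -> Prop) : form sg :=
  f_bigor A (fun s => f_bigand (fun _ : Dom sg => True) (fun V => f_eq V (s V))).

Definition allbut (sg : signature) (V : Dom sg) (u : assign sg) : intv sg :=
  [seq Tagged (fun W => Ran sg W) (u W) | W <- enum (Dom sg) & W != V].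

(* eta(V): conjunction of (W = w /\ PA_V = p) [] -> V = F_V(p); the
   antecedent assigns every variable other than V, so letting u range over
   all assignments (values at V irrelevant) covers all w, p exactly. *)
Definition eta (sg : signature) (F : sysf sg) (V : Dom sg) : form sg :=
  fun T => forall f, fn F V = Some f ->
    f_bigand (fun _ : assign sg => True)
             (fun u => f_cf (allbut V u) (f_eq V (f u))) T.

Definition xi (sg : signature) (V : Dom sg) : form sg :=
  f_bigand (fun _ : Ran sg V => True) (fun v =>
    f_bigand (fun _ : assign sg => True) (fun u =>
      f_impl (f_eq V v) (f_cf (allbut V u) (f_eq V v)))).

Definition is_const (sg : signature) (F : sysf sg) (V : Dom sg) : Prop :=
  exists f, fn F V = Some f /\ forall s s' : assign sg, f s = f s'.
Definition nce (sg : signature) (F : sysf sg) (V : Dom sg) : Prop :=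
  fn F V <> None /\ ~ is_const F V.

Definition Phi (sg : signature) (F : sysf sg) : form sg :=
  f_and (f_bigand (fun V => nce F V) (fun V => eta F V))
        (f_bigand (fun V => ~ nce F V) (fun V => xi V)).

(* F_V ~ G_V, written out for functions given on full assignments *)
Definition fn_sim (sg : signature) (F G : sysf sg) (V : Dom sg) : Prop :=
  forall f g, fn F V = Some f -> fn G V = Some g ->
    forall u u' : assign sg,
      (forall W, W \in pa F V :&: pa G V -> u W = u' W) -> f u = g u'.

Definition sys_sim (sg : signature) (F G : sysf sg) : Prop :=
  (forall V, nce F V <-> nce G V) /\ (forall V, nce F V -> fn_sim F G V).

Definition uniform (sg : signature) (T : team sg) : Prop :=
  forall p q, T p -> T q -> sys_sim p.2 q.2.

Definition team_at (sg : signature) (T : team sg) (F : sysf sg) : team sg :=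
  fun p => T p /\ sys_sim p.2 F.

Definition team_approx (sg : signature) (S T : team sg) : Prop :=
  forall F, is_system F ->
    forall s, team_asg (team_at S F) s <-> team_asg (team_at T F) s.

Definition preceq (sg : signature) (S T : team sg) : Prop :=
  exists R : team sg, (forall p, R p -> T p) /\ team_approx S R.

Definition pair_approx (sg : signature) (p q : pair sg) : Prop :=
  p.1 = q.1 /\ sys_sim p.2 q.2.

Definition quot_card (sg : signature) (T : team sg) (n : nat) : Prop :=
  exists r : 'I_n -> pair sg,
    (forall i, T (r i)) /\
    (forall i j, pair_approx (r i) (r j) -> i = j) /\
    (forall p, T p -> exists i, pair_approx p (r i)).

Definition chi (sg : signature) : form sg :=
  f_and (f_bigand (fun _ : Dom sg => True) (fun V =>
           f_bigand (fun _ : assign sg => True) (fun u =>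
             f_cf (allbut V u) (f_dep V))))
        (f_bigand (fun _ : Dom sg => True) (fun V => f_dep V)).

Fixpoint chik (sg : signature) (k : nat) : form sg :=
  match k with
  | 0 => @f_bot sg
  | 1 => @chi sg
  | k'.+1 => f_or (@chi sg) (@chik sg k')
  end.

Definition Xi (sg : signature) (T : team sg) : form sg :=
  fun U => exists k, quot_card T k.+1 /\
    f_or (@chik sg k)
      (f_or (Theta (fun s => ~ team_asg T s))
            (f_bigor (fun p : pair sg =>
                        team_asg T p.1 /\ is_system p.2 /\ ~ preceq (singleton p) T)
                     (fun p => f_and (Theta (fun s => s = p.1)) (Phi p.2)))) U.

(* Main.v *)
Require Import Defs.
From mathcomp Require Import all_boot.
From Stdlib Require Import Relations Classical FunctionalExtensionality.


Unset Strict Implicit.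
Unset Printing Implicit Defensive.

Definition ival {sg : signature} (H : sysf sg) (V : Dom sg) (u a : assign sg) : Ran sg V :=
  match fn H V with Some f => f u | None => a V end.

Definition upd {sg : signature} (u : assign sg) (V : Dom sg) (x : Ran sg V) : assign sg :=
  fun W => match V =P W with ReflectT e => eq_rect V (Ran sg) x W e | ReflectF _ => u W end.

Lemma upd_eq {sg : signature} (u : assign sg) V x : upd u V x V = x.
Proof.
rewrite /upd; case: (V =P V) => [e|//].
by rewrite (eq_irrelevance e erefl).
Qed.

Lemma upd_neq {sg : signature} (u : assign sg) V x W : W <> V -> upd u V x W = u W.
Proof.
move=> H; rewrite /upd; case: (V =P W) => [e|//].
by subst.
Qed.

Lemma in_dom_allbut {sg : signature} (V W : Dom sg) (u : assign sg) :
  in_dom W (allbut V u) = (W != V).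
Proof.
rewrite /in_dom /allbut -map_comp.
rewrite (eq_map (g := id)) // map_id mem_filter mem_enum andbT //.
Qed.

Lemma mem_allbut {sg : signature} (V W : Dom sg) (u : assign sg) :
  W != V -> Tagged (fun W => Ran sg W) (u W) \in allbut V u.
Proof.
move=> H; rewrite /allbut; apply: (map_f (fun W0 => Tagged (fun W => Ran sg W) (u W0))).
by rewrite mem_filter mem_enum andbT.
Qed.

Lemma consistent_allbut {sg : signature} (V : Dom sg) (u : assign sg) :
  consistent (allbut V u).
Proof.
move=> e1 e2 /mapP [W1 _ ->] /mapP [W2 _ ->] /= E; by subst.
Qed.

Lemma sys_dep {sg : signature} (H : sysf sg) V f :
  is_system H -> fn H V = Some f -> forall s s' : assign sg,
  (forall W, W != V -> s W = s' W) -> f s = f s'.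
Proof.
move=> [_ [Hn [Hd _]]] Ef s s' Hss; apply: (Hd V f Ef) => W HW.
apply: Hss; apply/eqP => E; move: HW; rewrite E; exact/negP/Hn.
Qed.

Lemma asg_do_val {sg : signature} (H : sysf sg) V u a t :
  is_system H -> asg_do H (allbut V u) a t -> t V = ival H V u a.
Proof.
move=> Hs [H1 H2].
have Htu : forall W, W != V -> t W = u W.
  by move=> W HW; exact: (H1 _ (mem_allbut _ _ u HW)).
have := H2 V; rewrite in_dom_allbut eqxx /= /ival => /(_ isT).
case E: (fn H V) => [f|//] ->.
by apply: (sys_dep _ _ _ Hs E).
Qed.

Lemma asg_do_ex {sg : signature} (H : sysf sg) V u a :
  is_system H -> exists t, asg_do H (allbut V u) a t.
Proof.
move=> Hs; exists (upd u V (ival H V u a)); split.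
  move=> e /mapP [W]; rewrite mem_filter => /andP [HW _] -> /=.
  by rewrite upd_neq //; apply/eqP.
move=> W; rewrite in_dom_allbut negbK => /eqP E; subst W.
rewrite upd_eq /ival.
case E: (fn H V) => [f|//].
apply: (sys_dep _ _ _ Hs E) => W0 HW0; by rewrite upd_neq //; apply/eqP.
Qed.

Lemma fn_sim_refl {sg : signature} (F : sysf sg) V : is_system F -> fn_sim F F V.
Proof.
move=> [_ [_ [Hd _]]] f g Ef Eg u u' Hu.
rewrite Ef in Eg; case: Eg => <-; apply: (Hd V f Ef) => W HW; apply: Hu.
by rewrite setIid.
Qed.

Lemma sim_refl {sg : signature} (F : sysf sg) : is_system F -> sys_sim F F.
Proof. by move=> Hs; split=> // V _; apply: fn_sim_refl. Qed.

Lemma sim_sym {sg : signature} (F G : sysf sg) : sys_sim F G -> sys_sim G F.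
Proof.
move=> [H1 H2]; split=> V; first by rewrite H1.
move/H1 => /H2 Hs g f Eg Ef u u' Hu.
symmetry; apply: (Hs f g Ef Eg) => W HW; symmetry; apply: Hu; by rewrite setIC.
Qed.

Lemma sim_trans {sg : signature} (F G H : sysf sg) :
  sys_sim F G -> sys_sim G H -> sys_sim F H.
Proof.
move=> [A1 A2] [B1 B2]; split=> V; first by rewrite A1 B1.
move=> HF; have HG := (proj1 (A1 V) HF).
have HsFG := A2 V HF; have HsGH := B2 V HG.
move=> f h Ef Eh u u' Hu.
case EG: (fn G V) => [g|]; last by case: HG; rewrite EG.
have fg : forall x y, (forall W, W \in pa F V :&: pa G V -> x W = y W) -> f x = g y :=
  HsFG f g Ef EG.
have gh : forall x y, (forall W, W \in pa G V :&: pa H V -> x W = y W) -> g x = h y :=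
  HsGH g h EG Eh.
pose w : assign sg := fun W => if W \in pa F V then u W else u' W.
have -> : f u = g w.
  apply: fg => W; rewrite inE => /andP [WF WG]; by rewrite /w WF.
apply: gh => W; rewrite inE => /andP [WG WH]; rewrite /w.
case WF: (W \in pa F V) => //; apply: Hu; by rewrite inE WF WH.
Qed.

Lemma fn_sim_pw {sg : signature} (H K : sysf sg) V h k :
  is_system H -> is_system K -> fn H V = Some h -> fn K V = Some k ->
  (forall u, h u = k u) -> fn_sim H K V.
Proof.
move=> [_ [_ [Hd _]]] [_ [_ [Kd _]]] Eh Ek Hpw f g Ef Eg u u' Hu.
rewrite Eh in Ef; case: Ef => <-; rewrite Ek in Eg; case: Eg => <-.
pose w : assign sg := fun W => if W \in pa H V then u W else u' W.
have -> : h u = h w.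
  apply: (Hd V h Eh) => W HW; by rewrite /w HW.
rewrite Hpw; apply: (Kd V k Ek) => W HW; rewrite /w.
case WH: (W \in pa H V) => //; apply: Hu; by rewrite inE WH HW.
Qed.

Lemma nce_transfer {sg : signature} (H K : sysf sg) V a b :
  is_system H -> is_system K -> nce H V ->
  (forall u, ival H V u a = ival K V u b) -> nce K V /\ fn_sim H K V.
Proof.
move=> Hs Ks [HN HC] Heq.
case Eh: (fn H V) HN => [h|//] _.
move: Heq; rewrite /ival Eh.
case Ek: (fn K V) => [k|] Heq.
  split; last by apply: (fn_sim_pw _ _ _ _ _ Hs Ks Eh Ek).
  split; first by rewrite Ek.
  move=> [k' [Ek' Hc]]; apply: HC; exists h; split=> // s s'.
  rewrite Ek in Ek'; case: Ek' => Ek'; subst k'.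
  by rewrite !Heq.
exfalso; apply: HC; exists h; split=> // s s'; by rewrite !Heq.
Qed.

Lemma ival_nonce {sg : signature} (H : sysf sg) V u a :
  in_S (a, H) -> ~ nce H V -> ival H V u a = a V.
Proof.
move=> [Hs Hc] HN; rewrite /ival.
case Eh: (fn H V) => [h|//].
have : is_const H V.
  apply: NNPP => HC; apply: HN; split=> //; by rewrite Eh.
move=> [h' [Eh' Hk]]; rewrite Eh in Eh'; case: Eh' => Eh'; subst h'.
by rewrite /= in Hc; rewrite (Hc V h Eh) (Hk u a).
Qed.

Lemma ival_sim {sg : signature} (H K : sysf sg) V u a :
  in_S (a, H) -> in_S (a, K) -> sys_sim H K -> ival H V u a = ival K V u a.
Proof.
move=> HS KS [S1 S2].
case: (classic (nce H V)) => HN.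
  have KN := proj1 (S1 V) HN.
  have Hs := S2 V HN.
  move: HN KN Hs => [HN _] [KN _]; rewrite /ival.
  case Eh: (fn H V) HN => [h|//] _; case Ek: (fn K V) KN => [k|//] _.
  move=> Hs; by apply: (Hs h k Eh Ek).
have KN : ~ nce K V by rewrite -S1.
by rewrite !ival_nonce.
Qed.

Lemma cf_elem {sg : signature} (U : team sg) a H V u :
  U (a, H) -> is_system H ->
  exists p', team_do U (allbut V u) p' /\ p'.1 V = ival H V u a.
Proof.
move=> HU Hs; have [t Ht] := asg_do_ex H V u a Hs.
exists (t, sys_do H (allbut V u)); split; last by apply: (asg_do_val _ _ _ _ _ Hs Ht).
by exists a, H.
Qed.

Lemma team_do_val {sg : signature} (U : team sg) V u p' :
  (forall p, U p -> in_S p) -> team_do U (allbut V u) p' ->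
  exists a H, U (a, H) /\ p'.1 V = ival H V u a.
Proof.
move=> HU [a [H [Ua [_ Hd]]]]; exists a, H; split=> //.
apply: (asg_do_val _ _ _ _ _ _ Hd); exact: (proj1 (HU _ Ua)).
Qed.

Lemma preceq_pair {sg : signature} (e p q : pair sg) :
  preceq (singleton e) (pairteam p q) -> is_system e.2 ->
  pair_approx e p \/ pair_approx e q.
Proof.
case: e => a H [R [HR Happ]] /= Hs.
have := proj1 (Happ H Hs a).
case.
  exists H; split; first by []. exact: sim_refl.
move=> F0 [RF0 Hsim].
case: (HR _ RF0) => E; [left|right]; rewrite -E; split=> //=; exact: sim_sym.
Qed.

Lemma preceq_mk {sg : signature} (r e p q : pair sg) :
  pairteam p q e -> r.1 = e.1 -> sys_sim r.2 e.2 ->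
  preceq (singleton r) (pairteam p q).
Proof.
case: r => a H; case: e => b K /= He Eab Hs; subst b.
exists (singleton (a, K)); split.
  by move=> x ->.
move=> F0 _ s; split.
  move=> [F1 [E1 S1]]; case: E1 => -> E1; subst F1.
  exists K; split=> //; exact: (sim_trans _ _ _ (sim_sym _ _ Hs) S1).
move=> [F1 [E1 S1]]; case: E1 => -> E1; subst F1.
exists H; split=> //; exact: (sim_trans _ _ _ Hs S1).
Qed.

Lemma Phi_self {sg : signature} (U : team sg) a H :
  (forall e, U e -> e = (a, H)) -> (forall p, U p -> in_S p) -> Phi H U.
Proof.
move=> HU US.
split.
  move=> V HN f Ef u _; right => p' /(team_do_val _ _ _ _ US) [a' [H' [Ua' ->]]].
  case: (HU _ Ua') => -> ->; by rewrite /ival Ef.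
move=> V HN v _ u _.
case: (classic (a V = v)) => Hv.
  exists (fun _ => False), U; split; first by move=> p; split; [right|case].
  split; first by [].
  right => p' /(team_do_val _ _ _ _ US) [a' [H' [Ua' ->]]].
  have HS := US _ Ua'.
  move: (HU _ Ua') HS => [-> ->] HS; by rewrite ival_nonce.
exists U, (fun _ => False); split; first by move=> p; split; [left|case].
split.
  move=> p Up Heq; apply: Hv; have := Heq p erefl; by rewrite (HU _ Up).
right => p' [? [? [[]]]].
Qed.

Lemma Phi_sim {sg : signature} (U : team sg) F' a G :
  is_system F' -> in_S (a, G) -> U (a, G) -> Phi F' U -> sys_sim F' G.
Proof.
move=> Fs GS Ua [Heta Hxi]; have Gs := proj1 GS.
have case1 : forall V, nce F' V -> nce G V /\ fn_sim F' G V.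
  move=> V HN; apply: (nce_transfer _ _ _ a a Fs Gs HN) => u.
  have [HN1 _] := HN.
  case Ef: (fn F' V) HN1 => [f|//] _.
  have := Heta V HN f Ef u I; case; first by move/(_ (consistent_allbut V u)).
  have [p' [Hp' Ep']] := cf_elem _ _ _ V u Ua Gs.
  move=> /(_ p' Hp'); rewrite Ep' => ->; by rewrite /ival Ef.
have case2 : forall V, ~ nce F' V -> ~ nce G V.
  move=> V HN; have := Hxi V HN (a V) I.
  have Hu : forall u, ival G V u a = a V.
    move=> u; have [U1 [U2 [HU [Hn Hc]]]] := Hxi V HN (a V) I u I.
    case: (proj1 (HU _) Ua) => HU1.
      by exfalso; apply: (Hn _ HU1) => p ->.
    case: Hc; first by move/(_ (consistent_allbut V u)).
    have [p' [Hp' Ep']] := cf_elem _ _ _ V u HU1 Gs.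
    move=> /(_ p' Hp'); by rewrite Ep'.
  move=> _ [HG HC]; apply: HC.
  case Eg: (fn G V) HG => [g|//] _; exists g; split=> // s s'.
  by have := Hu s; have := Hu s'; rewrite /ival Eg => -> ->.
split=> V; last by move/case1 => [].
split; first by move/case1 => [].
move=> HG; apply: NNPP => HF; exact: case2 V HF HG.
Qed.

Lemma qc_two {sg : signature} (p q : pair sg) n :
  in_S p -> in_S q -> ~ sys_sim p.2 q.2 -> quot_card (pairteam p q) n -> n = 2.
Proof.
move=> pS qS Hns [r [Hr [Hinj Hsurj]]].
have Heq : forall i j, r i = r j -> i = j.
  move=> i j E; apply: Hinj; rewrite E; split=> //.
  by case: (Hr j) => ->; apply: sim_refl; [exact: (proj1 pS)|exact: (proj1 qS)].
case: n r Hr Hinj Hsurj Heq => [|[|[|n]]] r Hr Hinj Hsurj Heq //.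
- by have [[i Hi] _] := Hsurj p (or_introl erefl).
- have [i [_ Si]] := Hsurj p (or_introl erefl).
  have [j [_ Sj]] := Hsurj q (or_intror erefl).
  rewrite (ord1 i) in Si; rewrite (ord1 j) in Sj.
  exfalso; apply: Hns; apply: (sim_trans _ _ _ Si); exact: sim_sym.
- pose i0 := @Ordinal n.+3 0 isT; pose i1 := @Ordinal n.+3 1 isT;
  pose i2 := @Ordinal n.+3 2 isT.
  have D01 : i0 <> i1 by move/(f_equal val).
  have D02 : i0 <> i2 by move/(f_equal val).
  have D12 : i1 <> i2 by move/(f_equal val).
  exfalso.
  case: (Hr i0) => E0; case: (Hr i1) => E1; case: (Hr i2) => E2.
  all: first [ apply: D01; apply: Heq; congruence
             | apply: D02; apply: Heq; congruence
             | apply: D12; apply: Heq; congruence ].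
Qed.

Lemma dir1 {sg : signature} (T : team sg) (HT : gct T) :
  (forall (s : assign sg) (F : sysf sg) (t : assign sg) (G : sysf sg),
     in_S (s, F) -> in_S (t, G) -> ~ sys_sim F G ->
     Xi (pairteam (s, F) (t, G)) T) -> uniform T.
Proof.
move=> HX [a H] [b K] Tp Tq; apply: NNPP => Hns.
have HS := HT _ Tp; have KS := HT _ Tq.
have [k [Hq [T1 [T2 [HU [Hchi H2]]]]]] := HX a H b K HS KS Hns.
have k1 := qc_two _ _ _ HS KS Hns Hq.
case: k k1 Hq Hchi => [|[|k]] // _ _ /= Hchi.
pose P := pairteam (a, H) (b, K).
have notT2 : forall e, P e -> T2 e -> False.
  move=> [ea eH] Pe T2e.
  have eS : in_S (ea, eH) by case: Pe => ->.
  have [T2a [T2b [HU2 [Hth Hbig]]]] := H2.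
  case: (proj1 (HU2 _) T2e) => Te.
    have [Ti [HTi HTiok]] := Hth.
    have [c [Hc Tic]] := proj1 (HTi _) Te.
    have Ec : ea = c.
      apply: functional_extensionality_dep => V.
      exact: (HTiok c Hc V I _ Tic).
    by apply: Hc; rewrite -Ec; exists eH.
  have [Ti [HTi HTiok]] := Hbig.
  have [r [[Pr1 [Pr2 Pr3]] Tir]] := proj1 (HTi _) Te.
  have [[Tj [HTj HTjok]] HPhi] := HTiok r (conj Pr1 (conj Pr2 Pr3)).
  have [c [Ec Tjc]] := proj1 (HTj _) Tir.
  have Ea : ea = r.1.
    rewrite -Ec; apply: functional_extensionality_dep => V.
    exact: (HTjok c Ec V I _ Tjc).
  apply: Pr3; apply: (preceq_mk _ (ea, eH)); [exact: Pe | by rewrite Ea | ].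
  exact: (Phi_sim (Ti r) r.2 ea eH Pr2 eS Tir HPhi).
have T1p : T1 (a, H).
  case: (proj1 (HU _) Tp) => // /(notT2 _ (or_introl erefl)) [].
have T1q : T1 (b, K).
  case: (proj1 (HU _) Tq) => // /(notT2 _ (or_intror erefl)) [].
have [Hcf _] := Hchi.
have Hv : forall V u, ival H V u a = ival K V u b.
  move=> V u; case: (Hcf V I u I); first by move/(_ (consistent_allbut V u)).
  have [p' [Hp' Ep']] := cf_elem _ _ _ V u T1p (proj1 HS).
  have [q' [Hq' Eq']] := cf_elem _ _ _ V u T1q (proj1 KS).
  move=> /(_ p' q' Hp' Hq'); by rewrite Ep' Eq'.
apply: Hns; split=> V.
  split=> HN.
    exact: (proj1 (nce_transfer _ _ _ a b (proj1 HS) (proj1 KS) HN (Hv V))).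
  apply: (proj1 (nce_transfer _ _ _ b a (proj1 KS) (proj1 HS) HN _)) => u.
  by rewrite Hv.
move=> HN; exact: (proj2 (nce_transfer _ _ _ a b (proj1 HS) (proj1 KS) HN (Hv V))).
Qed.

Lemma dir2 {sg : signature} (T : team sg) (HT : gct T) :
  uniform T ->
  (forall (s : assign sg) (F : sysf sg) (t : assign sg) (G : sysf sg),
     in_S (s, F) -> in_S (t, G) -> ~ sys_sim F G ->
     Xi (pairteam (s, F) (t, G)) T).
Proof.
move=> Hu a F b G FS GS Hns.
pose P := pairteam (a, F) (b, G).
exists 1; split.
  exists (fun i : 'I_2 => if nat_of_ord i == 0 then (a, F) else (b, G)).
  split; first by move=> i; case: ifP => _; [left|right].
  split.
    move=> [[|[|i]] Hi] [[|[|j]] Hj] //= Happ; try by apply: val_inj.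
    - by case: Happ => _ /= /Hns.
    - by case: Happ => _ /= /sim_sym /Hns.
  move=> p [->|->].
    exists (@Ordinal 2 0 isT); split=> //=; exact: sim_refl (proj1 FS).
  exists (@Ordinal 2 1 isT); split=> //=; exact: sim_refl (proj1 GS).
rewrite /=.
pose A e := pair_approx e (a, F) \/ pair_approx e (b, G).
have key : forall e1 e2, T e1 -> T e2 -> A e1 -> A e2 -> e1.1 = e2.1.
  move=> e1 e2 T1 T2 A1 A2; have S12 := Hu _ _ T1 T2.
  case: A1 => [[E1 S1]|[E1 S1]]; case: A2 => [[E2 S2]|[E2 S2]]; rewrite E1 E2 //.
    exfalso; apply: Hns; apply: (sim_trans _ _ _ (sim_sym _ _ S1)).
    exact: (sim_trans _ _ _ S12 S2).
  exfalso; apply: Hns; apply: (sim_trans _ _ _ (sim_sym _ _ S2)).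
  apply: (sim_trans _ _ _ (sim_sym _ _ S12) S1).
exists (fun e => T e /\ A e), (fun e => T e /\ ~ A e); split.
  move=> e; split; last by case=> [[]|[]].
  by move=> Te; case: (classic (A e)) => HA; [left|right].
split.
  have US : forall p, T p /\ A p -> in_S p by move=> p [/HT].
  split.
    move=> V _ u _; right => p' q'.
    move=> /(team_do_val _ _ _ _ US) [a1 [H1 [[T1 A1] ->]]].
    move=> /(team_do_val _ _ _ _ US) [a2 [H2 [[T2 A2] ->]]].
    have /= E := key _ _ T1 T2 A1 A2; subst a2.
    apply: ival_sim; [exact: HT|exact: HT|exact: Hu _ _ T1 T2].
  move=> V _ p q [Tp Ap] [Tq Aq]; by rewrite (key _ _ Tp Tq Ap Aq).
exists (fun e => (T e /\ ~ A e) /\ ~ team_asg P e.1),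
       (fun e => (T e /\ ~ A e) /\ team_asg P e.1); split.
  move=> e; split; last by case=> [[]|[]].
  by move=> Te; case: (classic (team_asg P e.1)) => HA; [right|left].
split.
  exists (fun c e => ((T e /\ ~ A e) /\ ~ team_asg P e.1) /\ e.1 = c); split.
    move=> e; split; first by move=> He; exists e.1; split; [exact: (proj2 He)|].
    by case=> c [_ []].
  by move=> c _ V _ e [_ ->].
exists (fun r e => ((T e /\ ~ A e) /\ team_asg P e.1) /\ e = r); split.
  move=> e; split; last by case=> r [_ []].
  move=> He; exists e; split=> //.
  have [[Te NA] HP] := He.
  split=> //; split; first exact: (proj1 (HT _ Te)).
  move=> /preceq_pair /(_ (proj1 (HT _ Te))) HA; exact: NA HA.
move=> [ra rH] _; split.
  exists (fun c e => ((T e /\ ~ A e) /\ team_asg P e.1) /\ e = (ra, rH)); split.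
    move=> e; split; first by move=> He; exists ra.
    by case=> c [_ H].
  by move=> c /= -> V _ e [_ ->].
apply: Phi_self; first by move=> e [_ ->].
by move=> p [[[Tp _] _] _]; apply: HT.
Qed.

Theorem lemma5p23 (sg : signature)
  (Hdom : 0 < #|Dom sg|) (Hran : forall V : Dom sg, 0 < #|Ran sg V|)
  (T : team sg) (HT : gct T) :
  (forall (s : assign sg) (F : sysf sg) (t : assign sg) (G : sysf sg),
     in_S (s, F) -> in_S (t, G) -> ~ sys_sim F G ->
     Xi (pairteam (s, F) (t, G)) T)
  <-> uniform T.
Proof.
split; [exact: dir1 | exact: dir2].
Qed.
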